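(* Let $\lambda,\mu,\rho,\mathsf D>0$, $X=\mathbb R$, $Y=[-\frac12\mathsf D,\frac12\mathsf D]$, and let $\hat f=\hat f_1$, i.e. $\hat f(x,y)=f(x,\hat y)+\partial_y f(x,\hat y)(y-\hat y)$. 1. If $\mu\le\sqrt{\lambda\rho/2}$, then for $f=F_{1,-1,\lambda,\mu,\rho}$ there exist $\hat y\in Y$ and $x^*\in\mathbb R$ such that $\hat\varphi_{2\lambda}'(x^* )=0$ while $|\varphi_{2\lambda}'(x^* )|\ge\frac{\mu\mathsf D}{3}$. 2. If $\mu\ge\sqrt{\lambda\rho/2}$, then there exist $\bar\mu\le\mu$, $\bar\rho\le\rho$, $\hat y\in Y$ and $x^*\in\mathbb R$ such that, for $f=F_{1,1,\lambda,\bar\mu,\bar\rho}$, $\hat\varphi_{2\lambda}'(x^* )=0$ while $|\varphi_{2\lambda}'(x^* )|\ge\sqrt{\frac{\lambda\rho\mathsf D^2}{8}}$.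
   Context: For $k\in\mathbb N\cup\{0\}$, $s\in\{\pm1,0\}$, $\lambda>0$, $\mu\ge0$, $\rho\ge0$: $F_{k,s,\lambda,\mu,\rho}(x,y)=-\frac{\lambda x^2}{2}+\mu xy+\frac{s\rho|y|^{k+1}}{(k+1)!}$ on $\mathbb R\times\mathbb R$. Given $f$, $X,Y\subseteq\mathbb R$ and $\hat y\in Y$: $\varphi(x)=\max_{y\in Y}f(x,y)$, $\hat\varphi(x)=\max_{y\in Y}\hat f(x,y)$, and for a function $\phi$ on $X$, $\phi_{2\lambda}(x)=\min_{u\in X}\{\phi(u)+\lambda(u-x)^2\}$ (Moreau envelope with parameter $2\lambda$); $'$ denotes the derivative in $x$. *)

(* Defs.v *)
From Stdlib Require Import Reals.
From Coquelicot Require Export Coquelicot.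
Open Scope R_scope.

Definition Fk (k : nat) (s lam mu rho : R) (x y : R) : R :=
  - (lam * x ^ 2) / 2 + mu * x * y + s * rho * (Rabs y) ^ (k + 1) / INR (Stdlib.Arith.Factorial.fact (k + 1)).

Definition Ybox (D : R) (y : R) : Prop := - D / 2 <= y /\ y <= D / 2.

(* max_{y in Y} g y (taken as the supremum; it is attained in our uses) *)
Definition maxOver (Y : R -> Prop) (g : R -> R) : R :=
  real (Lub_Rbar (fun z => exists y, Y y /\ z = g y)).

Definition phi (f : R -> R -> R) (Y : R -> Prop) (x : R) : R := maxOver Y (f x).

Definition fhat (f : R -> R -> R) (yhat : R) (x y : R) : R :=
  f x yhat + Derive (fun t => f x t) yhat * (y - yhat).

(* Moreau envelope with parameter 2 lam, X = R:
   phi_{2lam}(x) = min_{u in R} { phi(u) + lam (u - x)^2 } (as infimum) *)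
Definition moreau2 (lam : R) (ph : R -> R) (x : R) : R :=
  real (Glb_Rbar (fun z => exists u, z = ph u + lam * (u - x) ^ 2)).

(* Main.v *)
Require Import Defs.
From Stdlib Require Import Reals Lra Psatz.
From Coquelicot Require Import Coquelicot.
Open Scope R_scope.
Lemma Fk1 s lam mu rho x y : Fk 1 s lam mu rho x y = -(lam*x^2)/2 + mu*x*y + s*rho*y^2/2.
Proof. unfold Fk. replace (1+1)%nat with 2%nat by reflexivity. rewrite pow2_abs. simpl. field. Qed.
Lemma L1 (Y : R -> Prop) g M y0 : Y y0 -> (forall y, Y y -> g y <= M) ->
  (forall y, Y y -> g y <= maxOver Y g) /\ maxOver Y g <= M.
Proof.
  intros H0 HM. unfold maxOver.
  destruct (Lub_Rbar_correct (fun z => exists y, Y y /\ z = g y)) as [Hub Hl].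
  assert (HM' : Rbar_le (Lub_Rbar (fun z => exists y, Y y /\ z = g y)) M).
  { apply Hl. intros z [y [Hy ->]]. simpl. apply HM; auto. }
  assert (H1 : forall y, Y y -> Rbar_le (g y) (Lub_Rbar (fun z => exists y, Y y /\ z = g y))).
  { intros y Hy. apply Hub. exists y; auto. }
  specialize (H1 y0 H0).
  destruct (Lub_Rbar (fun z => exists y, Y y /\ z = g y)) as [r| |]; simpl in *; try contradiction.
  split; auto. intros y Hy. specialize (Hub (g y) (ex_intro _ y (conj Hy eq_refl))). exact Hub.
Qed.
Lemma L2 lam ph x m : (forall u, m <= ph u + lam*(u-x)^2) ->
  (forall u, moreau2 lam ph x <= ph u + lam*(u-x)^2) /\ m <= moreau2 lam ph x.
Proof.
  intros HM. unfold moreau2.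
  destruct (Glb_Rbar_correct (fun z => exists u, z = ph u + lam*(u-x)^2)) as [Hlb Hl].
  assert (HM' : Rbar_le m (Glb_Rbar (fun z => exists u, z = ph u + lam*(u-x)^2))).
  { apply Hl. intros z [u ->]. simpl. apply HM; auto. }
  assert (H1 := Hlb _ (ex_intro _ 0 eq_refl)).
  destruct (Glb_Rbar (fun z => exists u, z = ph u + lam*(u-x)^2)) as [r| |]; simpl in *; try contradiction.
  split; auto. intros u. exact (Hlb _ (ex_intro _ u eq_refl)).
Qed.
Lemma L3 h x0 a l C delta : 0 <= C -> 0 < delta ->
  (forall x, Rabs (x - x0) < delta -> a + l*(x-x0) - C*(x-x0)^2 <= h x <= a + l*(x-x0) + C*(x-x0)^2) ->
  is_derive h x0 l.
Proof.
  intros HC Hd H. apply is_derive_Reals. intros eps He.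
  assert (Ha : h x0 = a). { destruct (H x0) as [H1 H2]. rewrite Rminus_diag, Rabs_R0; auto. nra. }
  assert (Hp : 0 < Rmin delta (eps/(C+1))). { apply Rmin_pos; auto. apply Rdiv_lt_0_compat; lra. }
  exists (mkposreal _ Hp). intros hh Hh0 Hh. simpl in Hh.
  assert (Hh1 : Rabs hh < delta) by (eapply Rlt_le_trans; [exact Hh| apply Rmin_l]).
  assert (Hh2 : Rabs hh < eps/(C+1)) by (eapply Rlt_le_trans; [exact Hh| apply Rmin_r]).
  destruct (H (x0+hh)) as [H1 H2]. { replace (x0+hh-x0) with hh by ring. auto. }
  replace (x0+hh-x0) with hh in H1, H2 by ring. rewrite Ha.
  replace ((h (x0 + hh) - a) / hh - l) with ((h (x0+hh) - a - l*hh)/hh) by (field; auto).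
  unfold Rdiv. rewrite Rabs_mult, Rabs_inv.
  assert (Hpos : 0 < Rabs hh) by (apply Rabs_pos_lt; auto).
  assert (Hn : Rabs (h (x0 + hh) - a - l * hh) <= C * Rabs hh * Rabs hh).
  { replace (C * Rabs hh * Rabs hh) with (C*hh^2) by (rewrite <- (pow2_abs hh); ring). apply Rabs_le. nra. }
  apply Rle_lt_trans with (C * Rabs hh).
  { apply (Rmult_le_reg_r (Rabs hh)); auto. rewrite Rmult_assoc, Rinv_l by lra. lra. }
  apply Rle_lt_trans with ((C+1) * Rabs hh). nra.
  apply (Rmult_lt_reg_r (/(C+1))). apply Rinv_0_lt_compat; lra.
  replace ((C + 1) * Rabs hh * / (C + 1)) with (Rabs hh) by (field; lra). exact Hh2.
Qed.
Lemma Dfk s lam mu rho x yh : Derive (fun t => Fk 1 s lam mu rho x t) yh = mu*x + s*rho*yh.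
Proof.
  apply is_derive_unique. apply (is_derive_ext (fun t => -(lam*x^2)/2 + mu*x*t + s*rho*t^2/2)).
  intros; rewrite Fk1; auto. auto_derive. auto. field.
Qed.
Lemma fhat_eq s lam mu rho yh u y : fhat (Fk 1 s lam mu rho) yh u y =
  -(lam*u^2)/2 + mu*u*yh + s*rho*yh^2/2 + (mu*u + s*rho*yh)*(y-yh).
Proof. unfold fhat. rewrite Fk1, Dfk. ring. Qed.
Lemma box_lin D a y : Ybox D y -> a*y <= Rabs a * (D/2).
Proof. intros [H1 H2]. destruct (Rle_or_lt 0 a). rewrite Rabs_pos_eq by lra. nra.
  rewrite Rabs_left by lra. nra. Qed.
Lemma box_sq D y : Ybox D y -> y^2 <= D^2/4.
Proof. intros [H1 H2]. nra. Qed.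
Lemma box0 D : 0 < D -> Ybox D 0.
Proof. unfold Ybox; intros; lra. Qed.
Lemma boxD D : 0 < D -> Ybox D (D/2).
Proof. unfold Ybox; intros; lra. Qed.
Lemma boxmD D : 0 < D -> Ybox D (-D/2).
Proof. unfold Ybox; intros; lra. Qed.

Lemma case1hat lam mu rho D : 0 < lam -> 0 < mu -> 0 < rho -> 0 < D ->
  is_derive (moreau2 lam (phi (fhat (Fk 1 (-1) lam mu rho) 0) (Ybox D))) (mu*D/(2*lam)) 0.
Proof.
  intros Hl Hm Hr HD. set (c := mu*D/(2*lam)).
  assert (hc : mu*D = 2*lam*c) by (unfold c; field; lra).
  assert (cpos : 0 < c) by (unfold c; apply Rdiv_lt_0_compat; nra).
  assert (PB : forall u, (forall y, Ybox D y -> -(lam*u^2)/2 + mu*u*y <= phi (fhat (Fk 1 (-1) lam mu rho) 0) (Ybox D) u)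
     /\ phi (fhat (Fk 1 (-1) lam mu rho) 0) (Ybox D) u <= -(lam*u^2)/2 + lam*c*Rabs u).
  { intro u. unfold phi. destruct (L1 (Ybox D) (fhat (Fk 1 (-1) lam mu rho) 0 u) (-(lam*u^2)/2 + lam*c*Rabs u) 0) as [H1 H2].
    apply box0; auto.
    { intros y Hy. rewrite fhat_eq. pose proof (box_lin D (mu*u) y Hy). rewrite Rabs_mult, (Rabs_pos_eq mu) in H by lra. 
      replace (lam*c) with (mu*D/2) by lra. nra. }
    split; auto. intros y Hy. specialize (H1 y Hy). rewrite fhat_eq in H1. nra. }
  apply (L3 _ _ (lam*c^2/2) 0 lam (c/2)); try lra.
  intros x Hx. apply Rabs_lt_between in Hx.
  split.
  - destruct (L2 lam (phi (fhat (Fk 1 (-1) lam mu rho) 0) (Ybox D)) x (lam*x^2 - lam*(2*x-c)^2/2)) as [_ H2].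
    { intro u. destruct (PB u) as [H _]. specialize (H (D/2) (boxD D HD)).
      replace (mu*u*(D/2)) with (lam*c*u) in H by (replace (mu*u*(D/2)) with (u*(mu*D)/2) by field; rewrite hc; field).
      assert (0 <= lam*(u-2*x+c)^2) by (apply Rmult_le_pos; [lra| apply pow2_ge_0]). nra. }
    nra.
  - destruct (L2 lam (phi (fhat (Fk 1 (-1) lam mu rho) 0) (Ybox D)) x (lam*x^2 - lam*(2*x-c)^2/2)) as [H1 _].
    { intro u. destruct (PB u) as [H _]. specialize (H (D/2) (boxD D HD)).
      replace (mu*u*(D/2)) with (lam*c*u) in H by (replace (mu*u*(D/2)) with (u*(mu*D)/2) by field; rewrite hc; field).
      assert (0 <= lam*(u-2*x+c)^2) by (apply Rmult_le_pos; [lra| apply pow2_ge_0]). nra. }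
    specialize (H1 (2*x-c)). destruct (PB (2*x-c)) as [_ H]. rewrite Rabs_pos_eq in H by lra.
    assert (0 <= lam*(2*x-c-c)^2) by (apply Rmult_le_pos; [lra| apply pow2_ge_0]). nra.
Qed.
Lemma case1phi lam mu rho D : 0 < lam -> 0 < mu -> 0 < rho -> 0 < D -> mu^2 <= lam*rho/2 ->
  is_derive (moreau2 lam (phi (Fk 1 (-1) lam mu rho) (Ybox D))) (mu*D/(2*lam))
     (mu*D*(mu^2 - lam*rho)/(lam*rho+mu^2)).
Proof.
  intros Hl Hm Hr HD Hmu. set (c := mu*D/(2*lam)). set (K := lam*rho+mu^2).
  assert (HK : 0 < K) by (unfold K; nra).
  set (ys := mu^2*D/K). set (A := lam*(mu^2-lam*rho)/K). set (k := 2*lam*rho/K).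
  assert (HA : A <= 0).
  { unfold A. unfold Rdiv. apply Rmult_le_0_r. nra. left; apply Rinv_0_lt_compat; auto. }
  assert (Hys : Ybox D ys).
  { unfold ys, Ybox. split. assert (0 <= mu^2*D/K) by (apply Rdiv_le_0_compat; nra). lra.
    apply Rmult_le_reg_r with K; auto. unfold Rdiv. rewrite Rmult_assoc, Rinv_l by lra. unfold K. nra. }
  set (P := phi (Fk 1 (-1) lam mu rho) (Ybox D)).
  assert (PB : forall u, (forall y, Ybox D y -> Fk 1 (-1) lam mu rho u y <= P u)
     /\ P u <= -(lam*u^2)/2 + mu^2*u^2/(2*rho)).
  { intro u. unfold P, phi. destruct (L1 (Ybox D) (Fk 1 (-1) lam mu rho u) (-(lam*u^2)/2 + mu^2*u^2/(2*rho)) 0) as [H1 H2].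
    apply box0; auto.
    { intros y Hy. rewrite Fk1.
      assert (E : -(lam*u^2)/2 + mu^2*u^2/(2*rho) - (-(lam*u^2)/2 + mu*u*y + -1*rho*y^2/2) = (rho*y - mu*u)^2/(2*rho)) by (field; lra).
      assert (0 <= (rho*y - mu*u)^2/(2*rho)) by (apply Rdiv_le_0_compat; [apply pow2_ge_0|lra]). lra. }
    split; auto. }
  apply (L3 _ _ (A*c^2) (mu*D*(mu^2 - lam*rho)/(lam*rho+mu^2)) lam 1); try lra.
  intros x _.
  destruct (L2 lam P x (lam*x^2 - rho*ys^2/2 - (mu*ys - 2*lam*x)^2/(2*lam))) as [H1 H2].
  { intro u. destruct (PB u) as [H _]. specialize (H ys Hys). rewrite Fk1 in H.
    assert (E : -(lam*u^2)/2 + mu*u*ys + -1*rho*ys^2/2 + lam*(u-x)^2 - (lam*x^2 - rho*ys^2/2 - (mu*ys - 2*lam*x)^2/(2*lam)) = (lam*u + mu*ys - 2*lam*x)^2/(2*lam)) by (field; lra).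
    assert (0 <= (lam*u + mu*ys - 2*lam*x)^2/(2*lam)) by (apply Rdiv_le_0_compat; [apply pow2_ge_0|lra]). lra. }
  split.
  - assert (E : lam*x^2 - rho*ys^2/2 - (mu*ys - 2*lam*x)^2/(2*lam) = A*c^2 + mu*D*(mu^2 - lam*rho)/(lam*rho+mu^2)*(x-c) - lam*(x-c)^2).
    { unfold ys, A, c, K. field. split; nra. }
    lra.
  - specialize (H1 (k*x)). destruct (PB (k*x)) as [_ H].
    assert (E : -(lam*(k*x)^2)/2 + mu^2*(k*x)^2/(2*rho) + lam*(k*x-x)^2 = A*c^2 + mu*D*(mu^2 - lam*rho)/(lam*rho+mu^2)*(x-c) + A*(x-c)^2).
    { unfold k, A, c, K. field. split; nra. }
    assert (A*(x-c)^2 <= 0) by (apply Rmult_le_0_r; auto; apply pow2_ge_0).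
    assert (0 <= lam*(x-c)^2) by (apply Rmult_le_pos; [lra|apply pow2_ge_0]). lra.
Qed.
Lemma aux2 lam x0 t s : 0 < lam -> 0 < x0 -> -(x0/2) < s -> s < x0/2 ->
  0 <= lam*(x0*(2*Rabs t - t) + t^2/2 - 2*t*s + s^2).
Proof.
  intros Hl Hx H1 H2. apply Rmult_le_pos; [lra|].
  destruct (Rle_or_lt 0 t).
  - rewrite Rabs_pos_eq by lra. destruct (Rle_or_lt 0 s).
    + assert (0 <= t*(x0-2*s)) by (apply Rmult_le_pos; lra). nra.
    + assert (0 <= t*(x0+2*s)) by (apply Rmult_le_pos; lra). nra.
  - rewrite Rabs_left by lra. destruct (Rle_or_lt 0 s).
    + assert (0 <= (-t)*(3*x0-2*s)) by (apply Rmult_le_pos; lra). nra.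
    + assert (0 <= (-t)*(3*x0+2*s)) by (apply Rmult_le_pos; lra). nra.
Qed.
Lemma case2phi lam m rho D : 0 < lam -> 0 < m -> 0 < rho -> 0 < D ->
  is_derive (moreau2 lam (phi (Fk 1 1 lam m rho) (Ybox D))) (m*D/(4*lam)) (m*D/2).
Proof.
  intros Hl Hm Hr HD. set (c := m*D/(2*lam)). set (x0 := m*D/(4*lam)).
  assert (hc : m*D = 2*lam*c) by (unfold c; field; lra).
  assert (hx : c = 2*x0) by (unfold c, x0; field; lra).
  set (P := phi (Fk 1 1 lam m rho) (Ybox D)).
  assert (PB : forall u, (forall y, Ybox D y -> Fk 1 1 lam m rho u y <= P u)
     /\ P u <= -(lam*u^2)/2 + lam*c*Rabs u + rho*D^2/8).
  { intro u. unfold P, phi. destruct (L1 (Ybox D) (Fk 1 1 lam m rho u) (-(lam*u^2)/2 + lam*c*Rabs u + rho*D^2/8) 0) as [H1 H2].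
    apply box0; auto.
    { intros y Hy. rewrite Fk1. pose proof (box_lin D (m*u) y Hy). pose proof (box_sq D y Hy).
      rewrite Rabs_mult, (Rabs_pos_eq m) in H by lra.
      replace (m * Rabs u * (D/2)) with (lam*c*Rabs u) in H by (replace (m * Rabs u * (D/2)) with (Rabs u*(m*D)/2) by field; rewrite hc; field).
      assert (rho*y^2 <= rho*(D^2/4)) by (apply Rmult_le_compat_l; lra). lra. }
    split; auto. }
  apply (L3 _ _ (lam*x0^2 + rho*D^2/8) (m*D/2) lam 1); try lra.
  intros x _. rewrite hc, hx.
  destruct (L2 lam P x (lam*x^2 - lam*(2*x-c)^2/2 + rho*D^2/8)) as [H1 H2].
  { intro u. destruct (PB u) as [H _]. specialize (H (D/2) (boxD D HD)). rewrite Fk1 in H.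
    replace (m*u*(D/2)) with (lam*c*u) in H by (replace (m*u*(D/2)) with (u*(m*D)/2) by field; rewrite hc; field).
    assert (0 <= lam*(u-2*x+c)^2) by (apply Rmult_le_pos; [lra| apply pow2_ge_0]). nra. }
  split.
  - rewrite hx in H2. nra.
  - specialize (H1 0). destruct (PB 0) as [_ H]. rewrite Rabs_R0 in H. nra.
Qed.

Lemma case2hat lam m rho D : 0 < lam -> 0 < m -> 0 < rho -> 0 < D -> m^2 = lam*rho/2 ->
  is_derive (moreau2 lam (phi (fhat (Fk 1 1 lam m rho) (-D/8)) (Ybox D))) (m*D/(4*lam)) 0.
Proof.
  intros Hl Hm Hr HD Hm2. set (x0 := m*D/(4*lam)). set (yh := -D/8).
  assert (x0pos : 0 < x0) by (unfold x0; apply Rdiv_lt_0_compat; nra).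
  assert (hw : forall u, m*u + 1*rho*yh = m*(u-x0)).
  { intro u. unfold yh, x0. replace (rho) with (2*m^2/lam) at 1 by (rewrite Hm2; field; lra). field. lra. }
  assert (hx : m*D/2 = 2*lam*x0) by (unfold x0; field; lra).
  set (P := phi (fhat (Fk 1 1 lam m rho) yh) (Ybox D)).
  assert (PB : forall u, -(lam*u^2)/2 - rho*yh^2/2 + 2*lam*x0*Rabs (u-x0) <= P u
     /\ P u <= -(lam*u^2)/2 - rho*yh^2/2 + 2*lam*x0*Rabs (u-x0)).
  { intro u. unfold P, phi. destruct (L1 (Ybox D) (fhat (Fk 1 1 lam m rho) yh u) (-(lam*u^2)/2 - rho*yh^2/2 + 2*lam*x0*Rabs (u-x0)) 0) as [H1 H2].
    apply box0; auto.
    { intros y Hy. rewrite fhat_eq, hw. pose proof (box_lin D (m*(u-x0)) y Hy).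
      rewrite Rabs_mult, (Rabs_pos_eq m) in H by lra.
      replace (m * Rabs (u-x0) * (D/2)) with (2*lam*x0*Rabs (u-x0)) in H by (rewrite <- hx; field).
      assert (hw0 := hw 0). assert (Z : m*x0 + 1*rho*yh = 0) by lra.
      match goal with |- ?L <= _ => assert (E : L = -(lam*u^2)/2 - rho*yh^2/2 + m*(u-x0)*y + yh*(m*x0+1*rho*yh)) by field end.
      rewrite E, Z. lra. }
    split; auto.
    destruct (Rle_or_lt 0 (u-x0)).
    - specialize (H1 (D/2) (boxD D HD)). rewrite fhat_eq, hw in H1. rewrite Rabs_pos_eq by lra.
      replace (m*(u-x0)*(D/2-yh)) with (m*(u-x0)*(D/2) - m*(u-x0)*yh) in H1 by ring.
      replace (m*(u-x0)*(D/2)) with (2*lam*x0*(u-x0)) in H1 by (rewrite <- hx; field).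
      assert (hw0 := hw 0). assert (Z : m*x0 + 1*rho*yh = 0) by lra.
      match type of H1 with ?L <= _ => assert (E : L = -(lam*u^2)/2 - rho*yh^2/2 + 2*lam*x0*(u-x0) + yh*(m*x0+1*rho*yh)) by field end.
      rewrite E, Z in H1. lra.
    - specialize (H1 (-D/2) (boxmD D HD)). rewrite fhat_eq, hw in H1. rewrite Rabs_left by lra.
      replace (m*(u-x0)*(-D/2-yh)) with (-(m*(u-x0)*(D/2)) - m*(u-x0)*yh) in H1 by field.
      replace (m*(u-x0)*(D/2)) with (2*lam*x0*(u-x0)) in H1 by (rewrite <- hx; field).
      assert (hw0 := hw 0). assert (Z : m*x0 + 1*rho*yh = 0) by lra.
      match type of H1 with ?L <= _ => assert (E : L = -(lam*u^2)/2 - rho*yh^2/2 - 2*lam*x0*(u-x0) + yh*(m*x0+1*rho*yh)) by field end.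
      rewrite E, Z in H1. lra. }
  apply (L3 _ _ (-(lam*x0^2)/2 - rho*yh^2/2) 0 lam (x0/2)); try lra.
  intros x Hx. apply Rabs_lt_between in Hx.
  destruct (L2 lam P x (-(lam*x0^2)/2 - rho*yh^2/2)) as [H1 H2].
  { intro u. destruct (PB u) as [H _].
    assert (0 <= lam*(u-x0)^2) by (apply Rmult_le_pos; [lra| apply pow2_ge_0]).
    assert (0 <= lam*(x-x0)^2) by (apply Rmult_le_pos; [lra| apply pow2_ge_0]).
    assert (A := aux2 lam x0 (u-x0) (x-x0) Hl x0pos ltac:(lra) ltac:(lra)).
    assert (E : -(lam*u^2)/2 + 2*lam*x0*Rabs (u-x0) + lam*(u-x)^2 + lam*x0^2/2 = lam*(x0*(2*Rabs (u-x0) - (u-x0)) + (u-x0)^2/2 - 2*(u-x0)*(x-x0) + (x-x0)^2)) by field.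
    lra. }
  assert (0 <= lam*(x-x0)^2) by (apply Rmult_le_pos; [lra| apply pow2_ge_0]).
  split.
  - nra.
  - specialize (H1 x0). destruct (PB x0) as [_ Hq]. rewrite Rminus_diag, Rabs_R0 in Hq. replace (x0-x) with (-(x-x0)) in H1 by ring. nra.
Qed.
Theorem proposition4 (lam mu rho D : R) :
  0 < lam -> 0 < mu -> 0 < rho -> 0 < D ->
  (mu <= sqrt (lam * rho / 2) ->
     exists yhat xs : R,
       Ybox D yhat /\
       is_derive (moreau2 lam (phi (fhat (Fk 1 (-1) lam mu rho) yhat) (Ybox D))) xs 0 /\
       exists d : R,
         is_derive (moreau2 lam (phi (Fk 1 (-1) lam mu rho) (Ybox D))) xs d /\
         mu * D / 3 <= Rabs d)
  /\
  (sqrt (lam * rho / 2) <= mu ->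
     exists mub rhob yhat xs : R,
       0 <= mub /\ mub <= mu /\ 0 <= rhob /\ rhob <= rho /\
       Ybox D yhat /\
       is_derive (moreau2 lam (phi (fhat (Fk 1 1 lam mub rhob) yhat) (Ybox D))) xs 0 /\
       exists d : R,
         is_derive (moreau2 lam (phi (Fk 1 1 lam mub rhob) (Ybox D))) xs d /\
         sqrt (lam * rho * D ^ 2 / 8) <= Rabs d).
Proof.
  intros Hl Hm Hr HD.
  assert (Hpos : 0 <= lam*rho/2) by nra.
  assert (Hs2 : sqrt (lam*rho/2) ^ 2 = lam*rho/2) by (simpl; rewrite Rmult_1_r; apply sqrt_sqrt; auto).
  assert (Hsp : 0 < sqrt (lam*rho/2)) by (apply sqrt_lt_R0; nra).
  split.
  - intro Hmu. assert (Hmu2 : mu^2 <= lam*rho/2).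
    { rewrite <- Hs2. apply pow_incr. lra. }
    exists 0, (mu*D/(2*lam)). split; [apply box0; auto|]. split; [apply case1hat; auto|].
    exists (mu*D*(mu^2 - lam*rho)/(lam*rho+mu^2)). split; [apply case1phi; auto|].
    assert (HK : 0 < lam*rho+mu^2) by nra.
    replace (mu*D*(mu^2 - lam*rho)/(lam*rho+mu^2)) with (-(mu*D*((lam*rho - mu^2)/(lam*rho+mu^2)))) by (field; lra).
    rewrite Rabs_Ropp. assert (Hq : 1/3 <= (lam*rho - mu^2)/(lam*rho+mu^2)).
    { apply Rmult_le_reg_r with (lam*rho+mu^2); auto.
      replace ((lam * rho - mu ^ 2) / (lam * rho + mu ^ 2) * (lam * rho + mu ^ 2)) with (lam*rho - mu^2) by (field; lra). lra. }
    rewrite Rabs_pos_eq.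
    + assert (0 < mu*D) by nra. nra.
    + apply Rmult_le_pos; [nra|lra].
  - intro Hmu. set (m := sqrt (lam*rho/2)) in *.
    exists m, rho, (-D/8), (m*D/(4*lam)).
    split; [lra|]. split; [lra|]. split; [lra|]. split; [lra|].
    split; [unfold Ybox; lra|]. split.
    + apply case2hat; auto.
    + exists (m*D/2). split; [apply case2phi; auto|].
      replace (lam*rho*D^2/8) with ((m*D/2)^2) by (replace ((m*D/2)^2) with (m^2*D^2/4) by field; rewrite Hs2; field).
      rewrite sqrt_pow2 by nra. rewrite Rabs_pos_eq by nra. lra.
Qed.
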